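(* Let $\mathbb K$ be a field of characteristic $0$ and $N\ge1$. The image of the weight system $W^{\mathrm{St}}_{\mathfrak{gl}_N}:\mathcal A(\downarrow\downarrow)_{\mathbb K}\to\mathrm{End}(\mathbb K^N)^{\otimes2}$ associated with $(\mathfrak{gl}_N(\mathbb K),B_0,\mathrm{St})$ is a commutative subalgebra.
   Context: Jacobi diagrams on an oriented compact $1$-manifold $X$ span $\mathcal A(X)$ modulo AS, IHX, STU; $\mathcal A(X)_{\mathbb K}=\mathcal A(X)\otimes\mathbb K$; $\downarrow\downarrow$ is two downward oriented strands, and $\mathcal A(\downarrow\downarrow)$ is an algebra under stacking. For a metrized Lie algebra $(\mathfrak g,\langle\cdot,\cdot\rangle)$ over $\mathbb K$, the universal weight system $W_{\mathfrak g}:\mathcal A(\downarrow^{\otimes n})_{\mathbb K}\to U(\mathfrak g)^{\otimes n}$ is the algebra homomorphism obtained by putting on each edge the Casimir tensor $\Omega=\sum_av_a\otimes v^a$ (basis and dual basis w.r.t. the form), at each trivalent vertex $-\mathbf t$ where $\mathbf t\in\mathfrak g^{\otimes3}$ corresponds to $(x,y,z)\mapsto\langle[x,y],z\rangle$ (factors in cyclic order), contracting along edges and multiplying in $U(\mathfrak g)$ along each strand in its orientation order; for a representation $\rho:\mathfrak g\to\mathrm{End}(V)$, $W^\rho_{\mathfrak g}=U(\rho)^{\otimes n}\circ W_{\mathfrak g}$. $B_0(x,y)=\mathrm{tr}(xy)$ is the trace form and $\mathrm{St}$ the standard representation on $\mathbb K^N$. *)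

(* Defs.v *)
From HB Require Import structures.
From mathcomp Require Import all_boot all_order all_algebra.
From mathcomp Require Import mxtens.
Set Implicit Arguments. Unset Strict Implicit. Unset Printing Implicit Defensive.
Import GRing.Theory.
Local Open Scope ring_scope.

(* Jacobi diagrams on two downward oriented strands (the skeleton "↓↓").      *)
(* A diagram is encoded by half-edges ("slots"):                              *)
(*   - inl (inl i), i : 'I_n1 : the i-th univalent vertex (leg) on strand 1,  *)
(*     legs numbered 0,1,... in the order met along the strand orientation;   *)
(*   - inl (inr i), i : 'I_n2 : likewise on strand 2;                         *)
(*   - inr (v, k), v : 'I_nt, k : 'I_3 : the k-th half-edge at the trivalent  *)
(*     vertex v, the vertex orientation being the cyclic order 0 -> 1 -> 2.   *)
(* Edges are given by a fixed-point-free involution on slots.                 *)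

Definition jslot (n1 n2 nt : nat) : finType :=
  (('I_n1 + 'I_n2) + ('I_nt * 'I_3))%type.

Record jacobi2 := Jacobi2 {
  jd_n1 : nat;
  jd_n2 : nat;
  jd_nt : nat;
  jd_edge : jslot jd_n1 jd_n2 jd_nt -> jslot jd_n1 jd_n2 jd_nt;
  jd_edge_invol : forall s, jd_edge (jd_edge s) = s;
  jd_edge_nofix : forall s, jd_edge s <> s
}.

Definition leg1 (D : jacobi2) (i : 'I_(jd_n1 D)) : jslot (jd_n1 D) (jd_n2 D) (jd_nt D) :=
  inl (inl i).
Definition leg2 (D : jacobi2) (i : 'I_(jd_n2 D)) : jslot (jd_n1 D) (jd_n2 D) (jd_nt D) :=
  inl (inr i).
Definition tri (D : jacobi2) (v : 'I_(jd_nt D)) (k : 'I_3) :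
  jslot (jd_n1 D) (jd_n2 D) (jd_nt D) := inr (v, k).

(* gl_N(K) with the trace form B_0(x,y) = tr(xy).  Basis: elementary         *)
(* matrices E_ij; its B_0-dual basis is E_ji, so the Casimir tensor is        *)
(* Omega = \sum_(i,j) E_ij (x) E_ji.                                          *)

Definition glE (K : fieldType) (N : nat) (ij : 'I_N * 'I_N) : 'M[K]_N :=
  delta_mx ij.1 ij.2.

Definition B0 (K : fieldType) (N : nat) (x y : 'M[K]_N) : K := \tr (x *m y).

Definition lie (K : fieldType) (N : nat) (x y : 'M[K]_N) : 'M[K]_N :=
  x *m y - y *m x.

(* index of the dual basis vector *)
Definition dual_idx (N : nat) (ij : 'I_N * 'I_N) : 'I_N * 'I_N := (ij.2, ij.1).

Definition strand_prod (K : fieldType) (N n : nat) (F : 'I_n -> 'M[K]_N) : 'M[K]_N :=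
  \big[mulmx/1%:M]_(i < n) F i.

(* The weight system W^St_{gl_N} on a single Jacobi diagram, with values in   *)
(* End(K^N) (x) End(K^N), realised as 'M_(N*N) via the Kronecker product.     *)
(* A labelling assigns to every slot s a basis index; the edge {s, e s}       *)
(* carries the basis vector E_lab(s) at s and the dual vector at e s (this is *)
(* the Casimir tensor on the edge, summed over labellings).  Each trivalent   *)
(* vertex with half-edges carrying x,y,z (cyclic order) contributes           *)
(* -<[x,y],z>, i.e. the tensor -t; each leg carrying x contributes St(x) = x  *)
(* on its strand.                                                             *)
Definition weight_St (K : fieldType) (N : nat) (D : jacobi2) : 'M[K]_(N * N) :=
  \sum_(lab : {ffun jslot (jd_n1 D) (jd_n2 D) (jd_nt D) -> 'I_N * 'I_N}
        | [forall s, lab (@jd_edge D s) == dual_idx (lab s)])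
    ((\prod_(v < jd_nt D)
        (- B0 (lie (glE K (lab (tri v 0))) (glE K (lab (tri v 1))))
              (glE K (lab (tri v 2)))))
     *: tensmx (strand_prod (fun i => glE K (lab (leg1 i))))
               (strand_prod (fun i => glE K (lab (leg2 i))))).

Definition weight_image (K : fieldType) (N : nat) (M : 'M[K]_(N * N)) : Prop :=
  exists s : seq (K * jacobi2), M = \sum_(p <- s) p.1 *: weight_St K N p.2.

(* Main.v *)
Require Import Defs.
From HB Require Import structures.
From mathcomp Require Import all_boot all_order all_algebra.
From mathcomp Require Import mxtens.
From mathcomp Require Import all_fingroup ring zify.
Set Implicit Arguments. Unset Strict Implicit. Unset Printing Implicit Defensive.
Import GRing.Theory.
Local Open Scope ring_scope.


Definition jslotD (D : jacobi2) := jslot (jd_n1 D) (jd_n2 D) (jd_nt D).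
Definition validl (N : nat) (D : jacobi2) (lab : {ffun jslotD D -> 'I_N * 'I_N}) :=
  [forall s, lab (@jd_edge D s) == dual_idx (lab s)].
Definition coefl (K : fieldType) (N : nat) (D : jacobi2) (lab : {ffun jslotD D -> 'I_N * 'I_N}) : K :=
  \prod_(v < jd_nt D)
        (- B0 (lie (glE K (lab (tri v 0))) (glE K (lab (tri v 1))))
              (glE K (lab (tri v 2)))).
Definition terml (K : fieldType) (N : nat) (D : jacobi2) (lab : {ffun jslotD D -> 'I_N * 'I_N}) :
  'M[K]_(N * N) :=
  coefl K lab *: tensmx (strand_prod (fun i => glE K (lab (leg1 i))))
               (strand_prod (fun i => glE K (lab (leg2 i)))).

Lemma W_def (K : fieldType) (N : nat) (D : jacobi2) :
  weight_St K N D = \sum_(lab : {ffun jslotD D -> 'I_N * 'I_N} | validl lab) terml K lab.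
Proof. by []. Qed.

Lemma tens11 (K : fieldType) (N : nat) : tensmx (1%:M : 'M[K]_N) (1%:M : 'M[K]_N) = 1%:M.
Proof.
apply/matrixP => x y.
case: (mxtens_indexP x) => i1 i2; case: (mxtens_indexP y) => k1 k2.
rewrite tensmxE !mxE (inj_eq (can_inj (@mxtens_indexK _ _))) xpair_eqE.
by case: (i1 == k1); case: (i2 == k2); rewrite ?mul1r ?mul0r.
Qed.

Definition e0 (s : jslot 0 0 0) : jslot 0 0 0 := s.
Lemma e0_invol s : e0 (e0 s) = s. Proof. by []. Qed.
Lemma e0_nofix s : e0 s <> s.
Proof. by case: s => [[i|i]|[i k]]; case: i. Qed.
Definition jempty := Jacobi2 e0_invol e0_nofix.

Lemma W_empty (K : fieldType) (N : nat) (hN : (0 < N)%N) : weight_St K N jempty = 1%:M.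
Proof.
rewrite W_def.
pose f0 : {ffun jslotD jempty -> 'I_N * 'I_N} := [ffun _ => (Ordinal hN, Ordinal hN)].
rewrite (big_pred1 f0); last first.
  move=> lab; rewrite /validl /=.
  have -> : lab == f0 by apply/eqP/ffunP => -[[i|i]|[i k]]; case: i.
  by apply/forallP => -[[i|i]|[i k]]; case: i.
rewrite /terml /coefl big_ord0 scale1r /strand_prod !big_ord0.
exact: tens11.
Qed.


Definition Sslot (D E : jacobi2) :=
  jslot (jd_n1 D + jd_n1 E) (jd_n2 D + jd_n2 E) (jd_nt D + jd_nt E).

Definition ssplit (D E : jacobi2) (s : Sslot D E) : jslotD D + jslotD E :=
  match s with
  | inl (inl i) => match split i with inl i' => inl (inl (inl i')) | inr i' => inr (inl (inl i')) end
  | inl (inr i) => match split i with inl i' => inl (inl (inr i')) | inr i' => inr (inl (inr i')) end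
  | inr (v, k) => match split v with inl v' => inl (inr (v', k)) | inr v' => inr (inr (v', k)) end
  end.

Definition sunsplit (D E : jacobi2) (u : jslotD D + jslotD E) : Sslot D E :=
  match u with
  | inl (inl (inl i)) => inl (inl (lshift _ i))
  | inl (inl (inr i)) => inl (inr (lshift _ i))
  | inl (inr (v, k)) => inr (lshift _ v, k)
  | inr (inl (inl i)) => inl (inl (rshift _ i))
  | inr (inl (inr i)) => inl (inr (rshift _ i))
  | inr (inr (v, k)) => inr (rshift _ v, k)
  end.

Lemma ssplitK D E : cancel (@ssplit D E) (@sunsplit D E).
Proof.
case=> [[i|i]|[v k]] /=.
- by case Hs: (split i) => [j|j] /=; rewrite -[in RHS](splitK i) Hs.
- by case Hs: (split i) => [j|j] /=; rewrite -[in RHS](splitK i) Hs.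
- by case Hs: (split v) => [j|j] /=; rewrite -[in RHS](splitK v) Hs.
Qed.

Lemma sunsplitK D E : cancel (@sunsplit D E) (@ssplit D E).
Proof.
by case=> [[[i|i]|[v k]]|[[i|i]|[v k]]] /=;
  rewrite ?(unsplitK (inl _ : 'I__ + 'I__)) ?(unsplitK (inr _ : 'I__ + 'I__)).
Qed.

Definition smap (D E : jacobi2) (u : jslotD D + jslotD E) : jslotD D + jslotD E :=
  match u with inl x => inl (@jd_edge D x) | inr y => inr (@jd_edge E y) end.

Definition sedge (D E : jacobi2) (s : Sslot D E) : Sslot D E :=
  sunsplit (smap (ssplit s)).

Lemma sedge_invol D E s : @sedge D E (sedge s) = s.
Proof.
rewrite /sedge sunsplitK -[in RHS](ssplitK s); congr sunsplit.
by case: (ssplit s) => [x|y] /=; rewrite jd_edge_invol.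
Qed.

Lemma sedge_nofix D E s : @sedge D E s <> s.
Proof.
rewrite /sedge => H; have := f_equal (@ssplit D E) H; rewrite sunsplitK.
by case: (ssplit s) => [x|y] /= [] /jd_edge_nofix.
Qed.

Definition stack (D E : jacobi2) : jacobi2 :=
  @Jacobi2 (jd_n1 D + jd_n1 E) (jd_n2 D + jd_n2 E) (jd_nt D + jd_nt E)
    (@sedge D E) (@sedge_invol D E) (@sedge_nofix D E).

Lemma stack_edge D E (s : jslotD (stack D E)) : @jd_edge (stack D E) s = sedge (s : Sslot D E).
Proof. by []. Qed.

Definition comb (N : nat) (D E : jacobi2)
  (p : {ffun jslotD D -> 'I_N * 'I_N} * {ffun jslotD E -> 'I_N * 'I_N}) :
  {ffun jslotD (stack D E) -> 'I_N * 'I_N} :=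
  [ffun s => match ssplit (s : Sslot D E) with inl x => p.1 x | inr y => p.2 y end].

Definition uncomb (N : nat) (D E : jacobi2) (lab : {ffun jslotD (stack D E) -> 'I_N * 'I_N}) :
  {ffun jslotD D -> 'I_N * 'I_N} * {ffun jslotD E -> 'I_N * 'I_N} :=
  ([ffun x => lab (sunsplit (inl x) : jslotD (stack D E))],
   [ffun y => lab (sunsplit (inr y) : jslotD (stack D E))]).

Lemma combE (N : nat) D E p u :
  @comb N D E p (sunsplit u) = match u with inl x => p.1 x | inr y => p.2 y end.
Proof. by rewrite ffunE sunsplitK. Qed.

Lemma comb_bij (N : nat) D E : bijective (@comb N D E).
Proof.
exists (@uncomb N D E).
- case=> p1 p2; rewrite /uncomb; congr (_, _); by apply/ffunP => x; rewrite !ffunE sunsplitK.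
- move=> lab; apply/ffunP => s; rewrite /comb ffunE -[in RHS](ssplitK s).
  by case: (ssplit s) => [x|y] /=; rewrite ffunE.
Qed.

Lemma comb_valid (N : nat) D E p :
  validl (@comb N D E p) = validl p.1 && validl p.2.
Proof.
apply/forallP/andP.
- move=> H; split; apply/forallP => x.
  + have := H (sunsplit (inl x)); rewrite stack_edge /sedge sunsplitK.
    by rewrite !combE.
  + have := H (sunsplit (inr x)); rewrite stack_edge /sedge sunsplitK.
    by rewrite !combE.
- case=> /forallP H1 /forallP H2 s.
  rewrite stack_edge /sedge -[s in dual_idx (_ s)]ssplitK.
  by case: (ssplit s) => [x|y]; rewrite !combE /=.
Qed.

Lemma strand_prod_split (K : fieldType) (N m n : nat) (F : 'I_(m + n) -> 'M[K]_N) :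
  strand_prod F = strand_prod (fun i => F (lshift n i)) *m strand_prod (fun i => F (rshift m i)).
Proof.
change ((\prod_(i < m + n) F i) = (\prod_(i < m) F (lshift n i)) * (\prod_(i < n) F (rshift m i))).
exact: big_split_ord.
Qed.

Lemma comb_term (K : fieldType) (N : nat) D E p :
  terml K (@comb N D E p) = terml K p.1 *m terml K p.2.
Proof.
rewrite /terml -scalemxAl -scalemxAr scalerA tensmx_mul.
congr (_ *: _).
  rewrite /coefl.
  rewrite (big_split_ord _ xpredT); congr (_ * _); apply: eq_bigr => v _.
    have h k : comb p (tri (D := stack D E) (lshift _ v) k) = p.1 (tri v k).
      exact: (combE p (inl (inr (v, k)))).
    by rewrite !h.
  have h k : comb p (tri (D := stack D E) (rshift _ v) k) = p.2 (tri v k).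
    exact: (combE p (inr (inr (v, k)))).
  by rewrite !h.
congr tensmx; rewrite strand_prod_split; congr (_ *m _);
  apply: eq_bigr => i _.
- exact: (congr1 _ (combE p (inl (inl (inl i))))).
- exact: (congr1 _ (combE p (inr (inl (inl i))))).
- exact: (congr1 _ (combE p (inl (inl (inr i))))).
- exact: (congr1 _ (combE p (inr (inl (inr i))))).
Qed.

Lemma W_stack (K : fieldType) (N : nat) D E :
  weight_St K N (stack D E) = weight_St K N D *m weight_St K N E.
Proof.
rewrite !W_def mulmx_suml; symmetry.
under eq_bigr => i _ do rewrite mulmx_sumr.
symmetry.
rewrite pair_big_dep.
rewrite (reindex (@comb N D E)); last exact: onW_bij (comb_bij N D E).
apply: eq_big => p; first by rewrite comb_valid.
by move=> _; rewrite comb_term.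
Qed.


Definition gmx (K : fieldType) (N : nat) (s : {perm 'I_N}) (d : 'I_N -> K) : 'M[K]_N :=
  \matrix_(r, c) ((r == s c)%:R * d c).
Definition hmx (K : fieldType) (N : nat) (s : {perm 'I_N}) (d : 'I_N -> K) : 'M[K]_N :=
  \matrix_(r, c) ((s r == c)%:R / d r).

Lemma sum_deltal (K : fieldType) (n : nat) (a : 'I_n) (F : 'I_n -> K) :
  \sum_z (z == a)%:R * F z = F a.
Proof.
rewrite (bigD1 a) //= eqxx mul1r big1 ?addr0 // => z /negbTE ->; by rewrite mul0r.
Qed.

Lemma sum_deltar (K : fieldType) (n : nat) (a : 'I_n) (F : 'I_n -> K) :
  \sum_z F z * (z == a)%:R = F a.
Proof.
rewrite (bigD1 a) //= eqxx mulr1 big1 ?addr0 // => z /negbTE ->; by rewrite mulr0.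
Qed.

Lemma hg1 (K : fieldType) (N : nat) (s : {perm 'I_N}) (d : 'I_N -> K)
  (hd : forall i, d i != 0) : hmx s d *m gmx s d = 1%:M.
Proof.
apply/matrixP => r c; rewrite !mxE.
rewrite (eq_bigr (fun k => (k == s r)%:R * (((s r == s c)%:R * d c) / d r))); last first.
  move=> k _; rewrite !mxE; case: (eqVneq k (s r)) => [->|ne].
    by rewrite /=; ring.
  by rewrite /=; ring.
rewrite sum_deltal (inj_eq perm_inj).
case: (eqVneq r c) => [->|ne]; first by rewrite mul1r divff.
by rewrite !mul0r.
Qed.

Lemma mul_mx_deltaE (K : fieldType) (N : nat) (A : 'M[K]_N) (i j : 'I_N) :
  A *m delta_mx i j = \matrix_(r, l) (A r i * (l == j)%:R).
Proof.
apply/matrixP => r l; rewrite !mxE.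
rewrite (eq_bigr (fun k => (A r i * (l == j)%:R) * (k == i)%:R)); first by rewrite sum_deltar.
move=> k _; rewrite mxE; case: (eqVneq k i) => [->|ne] /=;
  rewrite ?eqxx ?andbT ?andbF ?andTb ?andFb ?(negbTE ne) /=; ring.
Qed.

Lemma mul_delta_mxE (K : fieldType) (N : nat) (A : 'M[K]_N) (i j : 'I_N) :
  delta_mx i j *m A = \matrix_(r, l) ((r == i)%:R * A j l).
Proof.
apply/matrixP => r l; rewrite !mxE.
rewrite (eq_bigr (fun k => ((r == i)%:R * A j l) * (k == j)%:R)); first by rewrite sum_deltar.
move=> k _; rewrite mxE; case: (eqVneq k j) => [->|ne] /=;
  rewrite ?eqxx ?andbT ?andbF ?andTb ?andFb ?(negbTE ne) /=; ring.
Qed.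

Lemma conjE (K : fieldType) (N : nat) (s : {perm 'I_N}) (d : 'I_N -> K)
  (hd : forall i, d i != 0) (ij : 'I_N * 'I_N) :
  gmx s d *m glE K ij *m hmx s d = (d ij.1 / d ij.2) *: glE K (s ij.1, s ij.2).
Proof.
rewrite /glE mul_mx_deltaE; apply/matrixP => r c.
rewrite !mxE /=.
rewrite (eq_bigr (fun l => (gmx s d r ij.1 * hmx s d ij.2 c) * (l == ij.2)%:R)); last first.
  move=> l _; rewrite mxE; case: (eqVneq l ij.2) => [->|ne]; rewrite ?eqxx ?(negbTE ne) /=; ring.
rewrite sum_deltar !mxE [c == _]eq_sym.
case: (r == s ij.1); case: (s ij.2 == c) => /=; try ring.
Qed.

Lemma gh1 (K : fieldType) (N : nat) (s : {perm 'I_N}) (d : 'I_N -> K)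
  (hd : forall i, d i != 0) : gmx s d *m hmx s d = 1%:M.
Proof. apply: mulmx1C; exact: hg1. Qed.

Definition phi (K : fieldType) (N : nat) (g h : 'M[K]_N) (X : 'M[K]_N) := g *m X *m h.

Lemma phiM (K : fieldType) (N : nat) (g h : 'M[K]_N) (hg : h *m g = 1%:M) X Y :
  phi g h (X *m Y) = phi g h X *m phi g h Y.
Proof.
by rewrite /phi !mulmxA -[g *m X *m h *m g]mulmxA hg mulmx1.
Qed.

Lemma phi_strand (K : fieldType) (N n : nat) (g h : 'M[K]_N) (hg : h *m g = 1%:M)
  (gh : g *m h = 1%:M) (F : 'I_n -> 'M[K]_N) :
  phi g h (strand_prod F) = strand_prod (fun i => phi g h (F i)).
Proof.
rewrite /strand_prod; apply: (big_morph (phi g h)) => [X Y|]; first exact: phiM.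
by rewrite /phi mulmx1.
Qed.

Lemma strand_scale (K : fieldType) (N n : nat) (c : 'I_n -> K) (X : 'I_n -> 'M[K]_N) :
  strand_prod (fun i => c i *: X i) = (\prod_i c i) *: strand_prod X.
Proof.
rewrite /strand_prod.
apply: (big_rec3 (fun y1 y2 y3 => y1 = y2 *: y3)); first by rewrite scale1r.
move=> i y1 y2 y3 _ ->.
by rewrite -scalemxAl -scalemxAr scalerA.
Qed.

Lemma tensmxZ (K : fieldType) (N : nat) (a b : K) (A B : 'M[K]_N) :
  tensmx (a *: A) (b *: B) = (a * b) *: tensmx A B.
Proof.
apply/matrixP => x y.
case: (mxtens_indexP x) => i1 i2; case: (mxtens_indexP y) => k1 k2.
rewrite [LHS]tensmxE [RHS]mxE tensmxE !mxE; ring.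
Qed.

Lemma B0_phi (K : fieldType) (N : nat) (g h : 'M[K]_N) (hg : h *m g = 1%:M) x y z :
  B0 (lie (phi g h x) (phi g h y)) (phi g h z) = B0 (lie x y) z.
Proof.
have -> : lie (phi g h x) (phi g h y) = phi g h (lie x y).
  by rewrite /lie -!phiM // /phi mulmxBr mulmxBl.
rewrite /B0 -phiM // /phi mxtrace_mulC.
change (\tr (h *m (g *m (lie x y *m z))) = \tr (lie x y *m z)).
by rewrite mulmxA hg mul1mx.
Qed.

Lemma B0Z (K : fieldType) (N : nat) (a b c : K) (x y z : 'M[K]_N) :
  B0 (lie (a *: x) (b *: y)) (c *: z) = a * b * c * B0 (lie x y) z.
Proof.
rewrite /B0 /lie -!scalemxAl -!scalemxAr !scalerA [b * a]mulrC -scalerBr -scalemxAl.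
by rewrite !mxtraceZ mulrA [c * _]mulrC.
Qed.

Definition lmap (N : nat) (s : {perm 'I_N}) (D : jacobi2) (lab : {ffun jslotD D -> 'I_N * 'I_N}) :
  {ffun jslotD D -> 'I_N * 'I_N} := [ffun t => (s (lab t).1, s (lab t).2)].
Definition cr (K : fieldType) (N : nat) (d : 'I_N -> K) (ij : 'I_N * 'I_N) : K := d ij.1 / d ij.2.

Lemma prod3 (K : fieldType) (f : 'I_3 -> K) : \prod_k f k = f 0 * f 1 * f 2.
Proof.
rewrite !big_ord_recr big_ord0 /= mul1r.
have -> : (widen_ord (leqnSn 2) (widen_ord (leqnSn 1) ord_max)) = 0 by apply: val_inj.
have -> : (widen_ord (leqnSn 2) ord_max) = 1 by apply: val_inj.
by have -> : (ord_max : 'I_3) = 2%:R by apply: val_inj.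
Qed.

Lemma prod_slots (K : fieldType) (D : jacobi2) (f : jslotD D -> K) :
  \prod_s f s = (\prod_i f (leg1 i)) * (\prod_i f (leg2 i)) *
                \prod_v (f (tri v 0) * f (tri v 1) * f (tri v 2)).
Proof.
rewrite /jslotD big_sumType big_sumType /=.
congr (_ * _).
rewrite (eq_bigr (fun p => f (inr (p.1, p.2)))); last by case.
rewrite -(pair_big xpredT xpredT (fun v k => f (inr (v, k)))) /=.
by apply: eq_bigr => v _; rewrite prod3.
Qed.

Lemma prod_valid_one (K : fieldType) (N : nat) (d : 'I_N -> K) (hd : forall i, d i != 0)
  (D : jacobi2) (lab : {ffun jslotD D -> 'I_N * 'I_N}) :
  validl lab -> \prod_s cr d (lab s) = 1.
Proof.
move=> /forallP V.
rewrite /cr prodf_div.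
have -> : \prod_s d (lab s).2 = \prod_s d (lab s).1.
  rewrite (reindex_inj (can_inj (@jd_edge_invol D))) /=.
  by apply: eq_bigr => s _; rewrite (eqP (V s)).
by rewrite divff //; apply/prodf_neq0 => s _.
Qed.

Lemma coef_conj (K : fieldType) (N : nat) (s : {perm 'I_N}) (d : 'I_N -> K)
  (hd : forall i, d i != 0) (D : jacobi2) (lab : {ffun jslotD D -> 'I_N * 'I_N}) :
  coefl K lab = (\prod_v (cr d (lab (tri v 0)) * cr d (lab (tri v 1)) * cr d (lab (tri v 2))))
                * coefl K (lmap s lab).
Proof.
rewrite /coefl -big_split /=; apply: eq_bigr => v _.
rewrite -(B0_phi (hg1 s hd)) /phi !conjE // B0Z /lmap !ffunE /cr.
ring.
Qed.

Lemma term_conj (K : fieldType) (N : nat) (s : {perm 'I_N}) (d : 'I_N -> K)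
  (hd : forall i, d i != 0) (D : jacobi2) (lab : {ffun jslotD D -> 'I_N * 'I_N}) :
  tensmx (gmx s d) (gmx s d) *m terml K lab *m tensmx (hmx s d) (hmx s d)
  = (\prod_t cr d (lab t)) *: terml K (lmap s lab).
Proof.
rewrite /terml -scalemxAr -scalemxAl !tensmx_mul.
have E1 n (F : 'I_n -> jslotD D) :
  gmx s d *m strand_prod (fun i => glE K (lab (F i))) *m hmx s d =
  (\prod_i cr d (lab (F i))) *: strand_prod (fun i => glE K (lmap s lab (F i))).
  rewrite -/(phi _ _ _) phi_strand ?hg1 ?gh1 //.
  rewrite -strand_scale /strand_prod; apply: eq_bigr => i _.
  by rewrite /phi conjE // /lmap ffunE.
rewrite !E1 tensmxZ !scalerA; congr (_ *: _).
rewrite prod_slots (coef_conj s hd); ring.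
Qed.

Lemma lmap_valid (N : nat) (s : {perm 'I_N}) (D : jacobi2) (lab : {ffun jslotD D -> 'I_N * 'I_N}) :
  validl (lmap s lab) = validl lab.
Proof.
rewrite /validl; apply: eq_forallb; move=> t /=. rewrite /lmap !ffunE /dual_idx /=.
by rewrite !xpair_eqE !(inj_eq perm_inj) [lab (jd_edge t)]surjective_pairing xpair_eqE.
Qed.

Lemma lmap_inj (N : nat) (s : {perm 'I_N}) (D : jacobi2) : injective (@lmap N s D).
Proof.
move=> l1 l2 E; apply/ffunP => t; have := congr1 (fun l : {ffun jslotD D -> _} => l t) E.
rewrite /lmap !ffunE; case=> /perm_inj e1 /perm_inj e2.
by rewrite [l1 t]surjective_pairing [l2 t]surjective_pairing e1 e2.
Qed.

Lemma W_conj (K : fieldType) (N : nat) (s : {perm 'I_N}) (d : 'I_N -> K)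
  (hd : forall i, d i != 0) (D : jacobi2) :
  tensmx (gmx s d) (gmx s d) *m weight_St K N D *m tensmx (hmx s d) (hmx s d)
  = weight_St K N D.
Proof.
rewrite !W_def mulmx_sumr mulmx_suml.
under eq_bigr => lab Hl do rewrite (term_conj s hd) (prod_valid_one hd Hl) scale1r.
rewrite [RHS](reindex_inj (@lmap_inj N s D)) /=.
by apply: eq_bigl => lab; rewrite lmap_valid.
Qed.

Lemma W_comm_g (K : fieldType) (N : nat) (s : {perm 'I_N}) (d : 'I_N -> K)
  (hd : forall i, d i != 0) (D : jacobi2) :
  tensmx (gmx s d) (gmx s d) *m weight_St K N D = weight_St K N D *m tensmx (gmx s d) (gmx s d).
Proof.
rewrite -{2}(W_conj s hd D) -!mulmxA tensmx_mul (hg1 s hd) tens11 mulmx1.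
by [].
Qed.


Lemma comb4 (N : nat) (a1 a2 b1 b2 : 'I_N)
  (H : forall c, ((a1 == c) + (a2 == c) = (b1 == c) + (b2 == c))%N) :
  ((b1 == a1) && (b2 == a2)) || ((b1 == a2) && (b2 == a1)).
Proof.
case: (eqVneq b1 a1) => [e1|ne1] /=.
  subst b1; rewrite [b2 == a2]eq_sym.
  move: (H b2); rewrite eqxx; case: (a2 == b2) => //=.
  move=> h; lia.
have h1 := H b1; rewrite eqxx [a1 == b1]eq_sym (negbTE ne1) /= in h1.
case: (eqVneq a2 b1) => [e2|ne2]; last by move: h1; lia.
subst a2; rewrite /= [b2 == a1]eq_sym.
move: (H b2); rewrite eqxx; case: (a1 == b2) => //=.
move=> h; lia.
Qed.

Definition tau (N : nat) (s : {perm 'I_N}) (x : 'I_(N * N)) : 'I_(N * N) :=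
  mxtens_index (s (mxtens_unindex x).1, s (mxtens_unindex x).2).
Definition Dv (K : fieldType) (N : nat) (d : 'I_N -> K) (x : 'I_(N * N)) : K :=
  d (mxtens_unindex x).1 * d (mxtens_unindex x).2.

Lemma idx_inj (N : nat) : injective (@mxtens_index N N).
Proof. exact: can_inj (@mxtens_indexK N N). Qed.

Lemma tau_inj (N : nat) (s : {perm 'I_N}) : injective (tau s).
Proof.
move=> x y; case: (mxtens_indexP x) => x1 x2; case: (mxtens_indexP y) => y1 y2.
by rewrite /tau !mxtens_indexK /= => /idx_inj [] /perm_inj -> /perm_inj ->.
Qed.

Lemma Gentry (K : fieldType) (N : nat) (s : {perm 'I_N}) (d : 'I_N -> K) a z :
  tensmx (gmx s d) (gmx s d) a z = (a == tau s z)%:R * Dv d z.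
Proof.
case: (mxtens_indexP a) => a1 a2; case: (mxtens_indexP z) => z1 z2.
rewrite tensmxE /tau /Dv !mxE mxtens_indexK (inj_eq (@idx_inj N)) xpair_eqE /=.
by case: (a1 == s z1); case: (a2 == s z2) => /=; ring.
Qed.

Lemma W_entry (K : fieldType) (N : nat) (s : {perm 'I_N}) (d : 'I_N -> K)
  (hd : forall i, d i != 0) (D : jacobi2) x y :
  Dv d x * weight_St K N D x y = weight_St K N D (tau s x) (tau s y) * Dv d y.
Proof.
have := congr1 (fun M : 'M[K]_(N * N) => M (tau s x) y) (W_comm_g s hd D).
rewrite !mxE /= => E.
transitivity (\sum_z tensmx (gmx s d) (gmx s d) (tau s x) z * weight_St K N D z y).
  rewrite -(sum_deltal x (fun z => Dv d z * weight_St K N D z y)).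
  apply: eq_bigr => z _; rewrite Gentry (inj_eq (@tau_inj N s)) [x == z]eq_sym; ring.
rewrite E -(sum_deltar (tau s y) (fun z => weight_St K N D (tau s x) z * Dv d y)).
by apply: eq_bigr => z _; rewrite Gentry; ring.
Qed.

Lemma natr_addK0 (K : fieldType) (charK0 : [pchar K] =i pred0) m k :
  m%:R = (m + k)%:R :> K -> k = 0%N.
Proof.
rewrite natrD => /eqP; rewrite -subr_eq0 opprD addrA subrr add0r oppr_eq0.
by move/(pcharf0P K).1: charK0 => -> /eqP.
Qed.

Lemma natr_inj0 (K : fieldType) (charK0 : [pchar K] =i pred0) m n :
  m%:R = n%:R :> K -> m = n.
Proof.
case: (leqP m n) => h.
  rewrite -(subnKC h) => /(natr_addK0 charK0) ->; by rewrite addn0.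
rewrite -(subnKC (ltnW h)) => /esym /(natr_addK0 charK0) ->; by rewrite addn0.
Qed.

Definition swi (N : nat) (x : 'I_(N * N)) : 'I_(N * N) :=
  mxtens_index ((mxtens_unindex x).2, (mxtens_unindex x).1).

Lemma swiK (N : nat) : involutive (@swi N).
Proof.
move=> x; case: (mxtens_indexP x) => x1 x2.
by rewrite /swi !mxtens_indexK.
Qed.

Lemma tau1 (N : nat) (x : 'I_(N * N)) : tau 1 x = x.
Proof. by case: (mxtens_indexP x) => x1 x2; rewrite /tau mxtens_indexK !perm1. Qed.

Lemma two_pow (K : fieldType) (b : bool) : (if b then 2 else 1 : K) = (2 ^ b)%:R.
Proof. by case: b. Qed.

Lemma W_torus (K : fieldType) (N : nat) (charK0 : [pchar K] =i pred0) (D : jacobi2) x y :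
  weight_St K N D x y != 0 -> (y == x) || (y == swi x).
Proof.
move=> nz.
case: (mxtens_indexP x) nz => a1 a2; case: (mxtens_indexP y) => b1 b2 nz.
rewrite /swi mxtens_indexK !(inj_eq (@idx_inj N)) !xpair_eqE /=.
apply: comb4 => c.
pose d := fun i : 'I_N => (if i == c then 2 else 1 : K).
have hd : forall i, d i != 0.
  move=> i; rewrite /d; case: (i == c); last exact: oner_neq0.
  by rewrite ((pcharf0P K).1 charK0).
have := W_entry 1 hd D (mxtens_index (a1, a2)) (mxtens_index (b1, b2)).
rewrite !tau1 [_ * Dv d _]mulrC => /eqP; rewrite -subr_eq0 -mulrBl mulf_eq0 (negbTE nz) orbF.
rewrite subr_eq0 /Dv !mxtens_indexK /= /d !two_pow -!natrM -!expnD => /eqP /(natr_inj0 charK0).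
by rewrite [b1 == c]eq_sym [b2 == c]eq_sym [a1 == c]eq_sym [a2 == c]eq_sym; move/expnI; apply.
Qed.

Lemma W_swap (K : fieldType) (N : nat) (charK0 : [pchar K] =i pred0) (D : jacobi2) x y :
  weight_St K N D (swi x) (swi y) = weight_St K N D x y.
Proof.
have T := @W_torus K N charK0 D.
have swi_inj := can_inj (@swiK N).
case: (boolP ((y == x) || (y == swi x))) => Hy; last first.
  have -> : weight_St K N D x y = 0 by apply/eqP; apply: contraNT Hy; exact: T.
  apply/eqP; apply: contraNT Hy => /T.
  by rewrite !(inj_eq swi_inj).
have hd : forall i : 'I_N, (fun _ => 1 : K) i != 0 by move=> i; exact: oner_neq0.
case: (mxtens_indexP x) Hy => a1 a2 Hy.
have := W_entry (tperm a1 a2) hd D (mxtens_index (a1, a2)) y.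
rewrite /Dv !mulr1 !mul1r => ->.
have Htx : tau (tperm a1 a2) (mxtens_index (a1, a2)) = swi (mxtens_index (a1, a2)).
  by rewrite /tau /swi !mxtens_indexK /= tpermL tpermR.
rewrite Htx; congr (weight_St K N D _ _).
case/orP: Hy => /eqP ->; first by rewrite Htx.
by rewrite /tau /swi !mxtens_indexK /= tpermL tpermR.
Qed.

Lemma sum2 (K : fieldType) (N : nat) (M : 'M[K]_(N * N)) (F : 'I_(N * N) -> K)
  (T : forall x y, M x y != 0 -> (y == x) || (y == swi x)) x :
  \sum_y M x y * F y = M x x * F x + (if swi x == x then 0 else M x (swi x) * F (swi x)).
Proof.
rewrite (bigD1 x) //=; congr (_ + _).
case: eqP => [e|/eqP ne].
  apply: big1 => y ny; case: (eqVneq (M x y) 0) => [->|/T]; first by rewrite mul0r.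
  by move=> /orP[/eqP yx|/eqP ys]; [rewrite yx eqxx in ny | rewrite ys e eqxx in ny].
rewrite (bigD1 (swi x)) /=; last exact: ne.
rewrite big1 ?addr0 // => y /andP [ny ns]; case: (eqVneq (M x y) 0) => [->|/T]; first by rewrite mul0r.
by rewrite (negbTE ny) (negbTE ns).
Qed.

Lemma comm_TS (K : fieldType) (N : nat) (M M' : 'M[K]_(N * N))
  (T : forall x y, M x y != 0 -> (y == x) || (y == swi x))
  (S : forall x y, M (swi x) (swi y) = M x y)
  (T' : forall x y, M' x y != 0 -> (y == x) || (y == swi x))
  (S' : forall x y, M' (swi x) (swi y) = M' x y) :
  M *m M' = M' *m M.
Proof.
have Z (A : 'M[K]_(N * N)) (TA : forall x y, A x y != 0 -> (y == x) || (y == swi x)) x y :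
    ~~ ((y == x) || (y == swi x)) -> A x y = 0.
  by move=> h; apply/eqP; apply: contraNT h; exact: TA.
apply/matrixP => x z; rewrite !mxE (sum2 _ T) (sum2 _ T').
case: (eqVneq z x) => [->|nzx].
  have e1 := S x (swi x); have e2 := S' x (swi x); rewrite swiK in e1 e2.
  by rewrite e1 e2; case: ifP => _; ring.
case: (eqVneq z (swi x)) => [ez|nzs].
  by rewrite ez in nzx *; rewrite S S' (negbTE nzx); ring.
have h1 : ~~ ((z == x) || (z == swi x)) by rewrite negb_or nzx nzs.
have h2 : ~~ ((z == swi x) || (z == swi (swi x))) by rewrite swiK negb_or nzx nzs.
by rewrite (Z _ T x z) // (Z _ T' x z) // (Z _ T (swi x) z) // (Z _ T' (swi x) z) //; case: ifP => _; ring.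
Qed.


Lemma W_commute (K : fieldType) (N : nat) (charK0 : [pchar K] =i pred0) D E :
  weight_St K N D *m weight_St K N E = weight_St K N E *m weight_St K N D.
Proof.
apply: comm_TS; try exact: W_torus; exact: W_swap.
Qed.

Unset Implicit Arguments.
Theorem corollary5p2 (K : fieldType) (N : nat)
    (charK0 : [pchar K] =i pred0) (hN : (1 <= N)%N) :
  @weight_image K N 1%:M /\
  (forall x y, @weight_image K N x -> @weight_image K N y ->
     @weight_image K N (x *m y)) /\
  (forall x y, @weight_image K N x -> @weight_image K N y ->
     x *m y = y *m x).
Proof.
split.
  exists [:: (1, jempty)].
  by rewrite big_cons big_nil addr0 scale1r W_empty.
split.
  move=> x y [s ->] [t ->].
  exists [seq (p.1 * q.1, stack p.2 q.2) | p <- s, q <- t].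
  rewrite big_allpairs_dep /= mulmx_suml.
  apply: eq_bigr => p _; rewrite mulmx_sumr.
  apply: eq_bigr => q _.
  by rewrite -scalemxAl -scalemxAr scalerA W_stack.
move=> x y [s ->] [t ->].
rewrite mulmx_suml mulmx_sumr.
apply: eq_bigr => p _; rewrite mulmx_sumr mulmx_suml.
apply: eq_bigr => q _.
by rewrite -!scalemxAl -!scalemxAr !scalerA mulrC W_commute.
Qed.
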